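(* Let $\Theta\subset\mathbb{R}^p$ be a parameter set containing the true parameter $\theta^\star$. Let $\Phi_1,\dots,\Phi_{N_j}\in\mathbb{R}^{c\times p}$ be the regressor matrices evaluated at sampling times $t_1,\dots,t_{N_j}$ along a planned trajectory, and let $A\in\mathbb{R}^{M\times p}$, $M=N_jc$, be their vertical stack. Assume the executed trajectory equals the planned one, so that the stacked regressor of the executed samples is $A_{\mathrm{act}}=A$, and that the measurements satisfy $z_j=\Phi_j\theta^\star+w_j$ with $\|w_j\|_\infty\le\overline w$ for all $j$; write $z=A\theta^\star+w$ for the stacked data. Define $$\Theta_{\mathrm{act}}=\{\theta\in\Theta:\ \|z-A_{\mathrm{act}}\theta\|_\infty\le\overline w\},\quad \mathcal{E}_\theta=\{e\in\mathbb{R}^p:\|Ae\|_\infty\le 2\overline w\},\quad \Theta_{N_j}(\theta^\star)=\Theta\cap(\theta^\star+\mathcal{E}_\theta).$$ Then for every unit direction $d\in\mathbb{R}^p$, $$w_d(\Theta_{\mathrm{act}})\le w_d\big(\Theta_{N_j}(\theta^\star)\big)\le \min\big(w_d(\Theta),\,2h_{\mathcal{E}_\theta}(d)\big),$$ where $h_{\mathcal{E}_\theta}(d)=\sup_{e\in\mathcal{E}_\theta}d^\top e$ admits the exact dual form $$h_{\mathcal{E}_\theta}(d)=2\overline w\,\min_{\lambda\in\mathbb{R}^M:\ A^\top\lambda=d}\|\lambda\|_1 .$$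
   Context: For a set $\mathcal{C}\subset\mathbb{R}^p$ and a direction $d$, the width of $\mathcal{C}$ along $d$ is $w_d(\mathcal{C})=\sup_{x\in\mathcal{C}}d^\top x-\inf_{x\in\mathcal{C}}d^\top x$. The regressors come from a linear-in-parameter identification model $z(t)=\Phi(x,u)\theta+w(t)$ with $\|w(t)\|_\infty\le\overline w$. In the paper, $d$ ranges over a finite set $\mathcal{D}$ of unit directions. *)

(* Defs.v *)
From HB Require Import structures.
From mathcomp Require Import all_boot all_order all_algebra.
From mathcomp Require Import classical_sets boolp reals constructive_ereal ereal.
Set Implicit Arguments. Unset Strict Implicit. Unset Printing Implicit Defensive.
Import Order.TTheory GRing.Theory Num.Theory.
Local Open Scope ring_scope.
Local Open Scope classical_set_scope.

(* Vertical stacking of Nj blocks of c rows: row j*c + r of the stack is row r of block j. *)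
Lemma blk_lt (Nj c : nat) (i : 'I_(Nj * c)) : (i %/ c < Nj)%N.
Proof.
case: c i => [|c] i; first by case: i => i; rewrite muln0.
by rewrite ltn_divLR // ltn_ord.
Qed.

Lemma row_lt (Nj c : nat) (i : 'I_(Nj * c)) : (i %% c < c)%N.
Proof.
case: c i => [|c] i; first by case: i => i; rewrite muln0.
by rewrite ltn_mod.
Qed.

Definition blk (Nj c : nat) (i : 'I_(Nj * c)) : 'I_Nj := Ordinal (blk_lt i).
Definition rowin (Nj c : nat) (i : 'I_(Nj * c)) : 'I_c := Ordinal (row_lt i).

Definition stack (R : Type) (Nj c n : nat) (F : 'I_Nj -> 'M[R]_(c, n)) :
  'M[R]_(Nj * c, n) := \matrix_(i, k) F (blk i) (rowin i) k.

Definition dotv (R : ringType) (p : nat) (d x : 'cV[R]_p) : R :=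
  \sum_(k < p) d k 0 * x k 0.
Definition infnorm (R : realDomainType) (m : nat) (v : 'cV[R]_m) : R :=
  \big[Num.max/0]_(i < m) `|v i 0|.
Definition norm1 (R : realDomainType) (m : nat) (v : 'cV[R]_m) : R :=
  \sum_(i < m) `|v i 0|.
Definition unit_dir (R : realDomainType) (p : nat) (d : 'cV[R]_p) : Prop :=
  \sum_(k < p) d k 0 ^+ 2 = 1.

Definition width (R : realType) (p : nat) (d : 'cV[R]_p) (C : set 'cV[R]_p) : \bar R :=
  (ereal_sup [set (dotv d x)%:E | x in C] - ereal_inf [set (dotv d x)%:E | x in C])%E.

Definition hsupp (R : realType) (p : nat) (C : set 'cV[R]_p) (d : 'cV[R]_p) : \bar R :=
  ereal_sup [set (dotv d e)%:E | e in C].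

(* Main.v *)
Require Import Defs.
From HB Require Import structures.
From mathcomp Require Import all_boot all_order all_algebra.
From mathcomp Require Import classical_sets boolp reals constructive_ereal ereal.
From mathcomp Require Import topology normedtype derive.
From mathcomp Require Import ring lra.
Import Order.TTheory GRing.Theory Num.Theory.
Import numFieldTopology.Exports numFieldNormedType.Exports.
Set Implicit Arguments. Unset Strict Implicit.
Local Open Scope ring_scope.
Local Open Scope classical_set_scope.

Lemma infnorm_le (R : realDomainType) m (v : 'cV[R]_m) b :
  0 <= b -> (forall i, `|v i 0| <= b) -> infnorm v <= b.
Proof. by move=> b0 H; rewrite /infnorm; apply: bigmax_le => // i _. Qed.

Lemma infnorm_ge (R : realDomainType) m (v : 'cV[R]_m) i : `|v i 0| <= infnorm v.
Proof. by rewrite /infnorm; apply: le_bigmax. Qed.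

Lemma infnorm_ge0 (R : realDomainType) m (v : 'cV[R]_m) : 0 <= infnorm v.
Proof.
rewrite /infnorm; elim/big_ind: _ => //= x y hx hy.
by rewrite le_max hx.
Qed.

Lemma dotvDr (R : ringType) p (d x y : 'cV[R]_p) :
  dotv d (x + y) = dotv d x + dotv d y.
Proof. by rewrite /dotv -big_split; apply: eq_bigr => k _; rewrite mxE mulrDr. Qed.

Lemma dotvDl (R : ringType) p (d x y : 'cV[R]_p) :
  dotv (x + y) d = dotv x d + dotv y d.
Proof. by rewrite /dotv -big_split; apply: eq_bigr => k _; rewrite mxE mulrDl. Qed.

Lemma dotvNr (R : ringType) p (d x : 'cV[R]_p) : dotv d (- x) = - dotv d x.
Proof. by rewrite /dotv -sumrN; apply: eq_bigr => k _; rewrite mxE mulrN. Qed.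

Lemma dotvNl (R : ringType) p (d x : 'cV[R]_p) : dotv (- x) d = - dotv x d.
Proof. by rewrite /dotv -sumrN; apply: eq_bigr => k _; rewrite mxE mulNr. Qed.

Lemma dotvBr (R : ringType) p (d x y : 'cV[R]_p) :
  dotv d (x - y) = dotv d x - dotv d y.
Proof. by rewrite dotvDr dotvNr. Qed.

Lemma dotvBl (R : ringType) p (d x y : 'cV[R]_p) :
  dotv (x - y) d = dotv x d - dotv y d.
Proof. by rewrite dotvDl dotvNl. Qed.

Lemma dotvZr (R : comRingType) p (d x : 'cV[R]_p) k :
  dotv d (k *: x) = k * dotv d x.
Proof. by rewrite /dotv mulr_sumr; apply: eq_bigr => i _; rewrite mxE mulrCA. Qed.

Lemma dotvZl (R : comRingType) p (d x : 'cV[R]_p) k :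
  dotv (k *: x) d = k * dotv x d.
Proof. by rewrite /dotv mulr_sumr; apply: eq_bigr => i _; rewrite mxE mulrA. Qed.

Lemma dotvC (R : comRingType) p (d x : 'cV[R]_p) : dotv d x = dotv x d.
Proof. by rewrite /dotv; apply: eq_bigr => i _; rewrite mulrC. Qed.

Lemma dotvE (R : comRingType) p (d x : 'cV[R]_p) : dotv d x = (d^T *m x) 0 0.
Proof. by rewrite /dotv mxE; apply: eq_bigr => i _; rewrite mxE. Qed.

Lemma dotv_adj (R : comRingType) m p (B : 'M[R]_(m, p)) (lam : 'cV[R]_m) (e : 'cV[R]_p) :
  dotv (B^T *m lam) e = dotv lam (B *m e).
Proof. by rewrite !dotvE trmx_mul trmxK mulmxA. Qed.

Lemma dotv_ge0 (R : realDomainType) p (x : 'cV[R]_p) : 0 <= dotv x x.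
Proof. by rewrite /dotv; apply: sumr_ge0 => i _; rewrite -expr2 sqr_ge0. Qed.

Lemma dotv_gt0 (R : realDomainType) p (x : 'cV[R]_p) : x != 0 -> 0 < dotv x x.
Proof.
move=> x0; rewrite lt_neqAle dotv_ge0 andbT; apply: contra x0 => /eqP H.
have := esym H; rewrite /dotv => /psumr_eq0P H2.
apply/eqP/matrixP => i j; rewrite (ord1 j) mxE.
have := H2 (fun i _ => (sqr_ge0 (x i 0))) i isT.
by move/eqP; rewrite mulf_eq0 orbb => /eqP.
Qed.
Lemma norm1_ge0 (R : realDomainType) m (v : 'cV[R]_m) : 0 <= norm1 v.
Proof. by apply: sumr_ge0. Qed.

Lemma norm1_entry (R : realDomainType) m (v : 'cV[R]_m) i : `|v i 0| <= norm1 v.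
Proof.
rewrite /norm1 (bigD1 i) //= lerDl; exact: sumr_ge0.
Qed.

Lemma norm1_convex (R : realDomainType) m (a b : 'cV[R]_m) s :
  0 <= s -> s <= 1 ->
  norm1 ((1 - s) *: a + s *: b) <= (1 - s) * norm1 a + s * norm1 b.
Proof.
move=> s0 s1; rewrite /norm1 !mulr_sumr -big_split /=; apply: ler_sum => i _.
rewrite !mxE; apply: le_trans (ler_normD _ _) _.
by rewrite !normrM (ger0_norm s0) ger0_norm // subr_ge0.
Qed.

Lemma norm1_delta (R : realDomainType) m (i : 'I_m) k :
  norm1 (k *: (delta_mx i 0 : 'cV[R]_m)) = `|k|.
Proof.
rewrite /norm1 (bigD1 i) //= big1 => [|j ji]; rewrite !mxE.
  by rewrite eqxx /= mulr1 addr0.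
by rewrite (negbTE ji) mulr0 normr0.
Qed.

Lemma dotv_delta (R : comRingType) m (w : 'cV[R]_m) i k :
  dotv w (k *: delta_mx i 0) = k * w i 0.
Proof.
rewrite dotvZr /dotv (bigD1 i) //= big1 => [|j ji]; rewrite !mxE.
  by rewrite eqxx /= mulr1 addr0.
by rewrite (negbTE ji) mulr0.
Qed.

Lemma weak_dual (R : realDomainType) m (lam y : 'cV[R]_m) :
  dotv lam y <= norm1 lam * infnorm y.
Proof.
rewrite /dotv /norm1 mulr_suml; apply: ler_sum => i _.
apply: le_trans (ler_norm _) _; rewrite normrM ler_wpM2l //.
exact: infnorm_ge.
Qed.

Lemma cont_sum (R : realType) m n (F : 'I_n -> 'rV[R]_m -> R) :
  (forall i, continuous (F i)) -> continuous (fun v => \sum_(i < n) F i v).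
Proof.
move=> H.
suff: forall s : seq 'I_n, continuous (fun v => \sum_(i <- s) F i v) by apply.
elim => [|a s IH].
  have -> : (fun v : 'rV[R]_m => \sum_(i <- [::]) F i v) = fun=> 0.
    by apply: funext => v; rewrite big_nil.
  exact: cst_continuous.
have -> : (fun v : 'rV[R]_m => \sum_(i <- a :: s) F i v) =
   (fun v => F a v + \sum_(i <- s) F i v).
  by apply: funext => v; rewrite big_cons.
by move=> x; apply: (@continuousD _ R^o _ (F a) (fun v => \sum_(i <- s) F i v)); [exact: H | exact: IH].
Qed.

Lemma cont_coord (R : realType) m (i : 'I_m) :
  continuous (fun v : 'rV[R]_m => v 0 i).
Proof. exact: coord_continuous. Qed.

Lemma cont_lin (R : realType) m q (B : 'M[R]_(q, m)) k :
  continuous (fun v : 'rV[R]_m => (B *m v^T) k 0).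
Proof.
have -> : (fun v : 'rV[R]_m => (B *m v^T) k 0) =
   (fun v => \sum_(i < m) (fun=> B k i) v * v 0 i).
  by apply: funext => v; rewrite mxE; apply: eq_bigr => i _; rewrite mxE.
apply: cont_sum => i x; apply: continuousM; first exact: cst_continuous.
exact: cont_coord.
Qed.

Lemma cont_norm (R : realType) m (f : 'rV[R]_m -> R) :
  continuous f -> continuous (fun v => `|f v|).
Proof.
move=> H x; apply: continuous_comp; first exact: H.
exact: norm_continuous.
Qed.
Lemma min_exists (R : realType) m (f : 'rV[R]_m -> R) (S : set 'rV[R]_m) r :
  S !=set0 -> closed S -> 0 <= r -> (forall v, S v -> forall i, `|v 0 i| <= r) ->
  continuous f -> exists2 v, S v & forall u, S u -> f v <= f u.
Proof.
move=> S0 Scl r0 Sb fc.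
have cS : compact S.
  apply: bounded_closed_compact => //.
  rewrite /bounded_near.
  have := nbhs_pinfty_ge (num_real r); apply: filterS => M0 rM v Sv /=.
  rewrite /Num.Def.normr /= mx_normrE; apply: bigmax_le => [|[i j] _]; first exact: le_trans rM.
  by rewrite /= (ord1 i); apply: le_trans (Sb v Sv j) rM.
have cf : {within S, continuous f} by apply: continuous_subspaceT.
have [v vS vmin] := EVT_min_rV S0 cS cf.
exists v; first by move: vS; rewrite inE.
by move=> u Su; apply: vmin; rewrite inE.
Qed.

Lemma closed_le_fun (R : realType) m (f : 'rV[R]_m -> R) t :
  continuous f -> closed [set v | f v <= t].
Proof.
move=> fc; apply: (@preimage_closed _ _ f [set x | x <= t]).
  by move=> x _; exact: fc.
exact: closed_le.
Qed.

Lemma resid_eq (R : realType) m q (B : 'M[R]_(q, m)) (d : 'cV[R]_q) (v : 'rV[R]_m) :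
  (\sum_k `|(B *m v^T) k 0 - d k 0| <= 0) <-> B *m v^T = d.
Proof.
split => [H|<-]; last by rewrite big1 // => k _; rewrite subrr normr0.
have H0 : \sum_k `|(B *m v^T) k 0 - d k 0| = 0.
  by apply/eqP; rewrite eq_le H; apply: sumr_ge0.
have /psumr_eq0P H2 := H0.
apply/matrixP => k j; rewrite (ord1 j); apply/eqP; rewrite -subr_eq0 -normr_eq0.
by apply/eqP; apply: H2.
Qed.

Lemma closed_feas (R : realType) m q (B : 'M[R]_(q, m)) (d : 'cV[R]_q) :
  closed [set v : 'rV[R]_m | B *m v^T = d].
Proof.
have -> : [set v : 'rV[R]_m | B *m v^T = d] =
   [set v | \sum_k `|(B *m v^T) k 0 - d k 0| <= 0].
  by apply/seteqP; split => v /= /resid_eq.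
apply: closed_le_fun; apply: cont_sum => k; apply: cont_norm.
move=> x; apply: (@continuousB _ R^o _ (fun v : 'rV[R]_m => (B *m v^T) k 0) (fun=> d k 0)).
  exact: cont_lin.
exact: cst_continuous.
Qed.

Lemma cont_norm1 (R : realType) m : continuous (fun v : 'rV[R]_m => norm1 v^T).
Proof.
have -> : (fun v : 'rV[R]_m => norm1 v^T) = (fun v => \sum_i `|v 0 i|).
  by apply: funext => v; apply: eq_bigr => i _; rewrite mxE.
by apply: cont_sum => i; apply: cont_norm; exact: cont_coord.
Qed.
Lemma norm1_0 (R : realDomainType) m : norm1 (0 : 'cV[R]_m) = 0.
Proof. by rewrite /norm1 big1 // => i _; rewrite mxE normr0. Qed.

Lemma sep (R : realType) m p (B : 'M[R]_(m, p)) (d : 'cV[R]_p) (t : R) :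
  0 <= t -> (forall lam : 'cV[R]_m, norm1 lam <= t -> B^T *m lam != d) ->
  exists e : 'cV[R]_p, t * infnorm (B *m e) < dotv d e.
Proof.
move=> t0 Hn.
pose S := [set v : 'rV[R]_m | norm1 v^T <= t].
pose f := fun v : 'rV[R]_m => dotv (d - B^T *m v^T) (d - B^T *m v^T).
have fc : continuous f.
  have -> : f = (fun v => \sum_k ((fun v : 'rV[R]_m => d k 0 - (B^T *m v^T) k 0) v *
                                 (fun v : 'rV[R]_m => d k 0 - (B^T *m v^T) k 0) v)).
    by apply: funext => v; rewrite /f /dotv; apply: eq_bigr => k _; rewrite !mxE.
  apply: cont_sum => k x.
  have ck : continuous (fun v : 'rV[R]_m => d k 0 - (B^T *m v^T) k 0).
    move=> y; apply: (@continuousB _ R^o _ (fun=> d k 0) (fun v : 'rV[R]_m => (B^T *m v^T) k 0)).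
      exact: cst_continuous.
    exact: cont_lin.
  exact: (@continuousM R _ _ _ x (ck x) (ck x)).
have S0 : S !=set0 by exists 0; rewrite /S /= trmx0 norm1_0.
have Sb : forall v, S v -> forall i, `|v 0 i| <= t.
  move=> v Sv i; apply: le_trans Sv; have := norm1_entry (v^T) i; by rewrite mxE.
have [v1 Sv1 vmin] := min_exists S0 (closed_le_fun (t:=t) (@cont_norm1 R m)) t0 Sb fc.
pose lam1 := v1^T; pose x0 := B^T *m lam1; pose e := d - x0.
have e0 : e != 0 by rewrite /e subr_eq0 eq_sym; apply: Hn.
have VI : forall lam, norm1 lam <= t -> dotv e (B^T *m lam - x0) <= 0.
  move=> lam hl; pose y := B^T *m lam - x0.
  have key : forall s, 0 < s -> s <= 1 -> 0 <= s * dotv y y - 2 * dotv e y.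
    move=> s s0 s1.
    have := vmin ((lam1 + s *: (lam - lam1))^T).
    have -> : lam1 + s *: (lam - lam1) = (1 - s) *: lam1 + s *: lam.
      by rewrite scalerBr scalerBl scale1r addrA addrAC.
    rewrite /S /= trmxK => /(_ _)/wrap[].
      apply: le_trans (norm1_convex _ _ (ltW s0) s1) _.
      have : (1 - s) * norm1 lam1 <= (1 - s) * t.
        by apply: ler_wpM2l; [rewrite subr_ge0 | exact: Sv1].
      have : s * norm1 lam <= s * t by apply: ler_wpM2l => //; exact: ltW.
      lra.
    rewrite /f trmxK -/lam1 -/x0 -/e.
    have -> : d - B^T *m ((1 - s) *: lam1 + s *: lam) = e - s *: y.
      rewrite /e /y /x0 mulmxDr -!scalemxAr.
      move: (B^T *m lam1) (B^T *m lam) => P Q.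
      rewrite scalerBl scale1r scalerBr !opprD !opprK !addrA.
      by rewrite addrAC.
    have hexp : forall E Y : 'cV[R]_p, dotv (E - s *: Y) (E - s *: Y) =
        dotv E E - 2 * s * dotv E Y + s ^+ 2 * dotv Y Y.
      move=> E Y; rewrite !(dotvBl, dotvBr, dotvZl, dotvZr) (dotvC Y E); ring.
    rewrite hexp.
    move=> H.
    have : 0 <= s * (s * dotv y y - 2 * dotv e y) by lra.
    by rewrite pmulr_rge0.
  rewrite leNgt; apply/negP; rewrite -/y => a0.
  move: a0 (dotv_ge0 y) key; move: (dotv e y) (dotv y y) => a b a0 b0 key.
  have ab0 : 0 < a + b by lra.
  pose s := a / (a + b).
  have hs : s * (a + b) = a by rewrite /s mulfVK // gt_eqF.
  have s0 : 0 < s by rewrite /s divr_gt0.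
  have s1 : s <= 1 by rewrite /s ler_pdivrMr // mul1r; lra.
  have := key s s0 s1.
  nra.
have hx0 : 0 <= dotv e x0.
  have := VI 0; rewrite norm1_0 mulmx0 sub0r dotvNr => /(_ t0); lra.
have hi : forall i, t * `|(B *m e) i 0| <= dotv e x0.
  move=> i.
  have Hk : forall k, `|k| = t -> k * (B *m e) i 0 <= dotv e x0.
    move=> k hk; have := VI (k *: delta_mx i 0); rewrite norm1_delta hk lexx.
    move=> /(_ isT); rewrite dotvBr dotvC dotv_adj dotvC dotv_delta; lra.
  have H1 := Hk t (ger0_norm t0).
  have H2 := Hk (- t); rewrite normrN (ger0_norm t0) in H2; have {}H2 := H2 erefl.
  have [xpos|xneg] := lerP 0 ((B *m e) i 0).
    by rewrite ger0_norm.
  by rewrite ltr0_norm //; lra.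
have hinf : t * infnorm (B *m e) <= dotv e x0.
  have [->|tpos] := eqVneq t 0; first by rewrite mul0r.
  have tp : 0 < t by rewrite lt_neqAle eq_sym tpos.
  rewrite -ler_pdivlMl //; apply: infnorm_le; first by rewrite mulr_ge0 // invr_ge0 ltW.
  by move=> i; rewrite ler_pdivlMl //; exact: hi.
exists e.
have -> : d = x0 + e by rewrite /e addrC subrK.
rewrite dotvC dotvDr -/e.
have := dotv_gt0 e0; lra.
Qed.
Lemma sep2 (R : realType) m p (B : 'M[R]_(m, p)) (d : 'cV[R]_p) (t w : R) :
  0 < w -> 0 <= t -> (forall lam : 'cV[R]_m, norm1 lam <= t -> B^T *m lam != d) ->
  exists e : 'cV[R]_p, infnorm (B *m e) <= 2 * w /\ 2 * w * t < dotv d e.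
Proof.
move=> w0 t0 H; have [e he] := sep t0 H.
have n0 := infnorm_ge0 (B *m e).
have [nz|npos] := eqVneq (infnorm (B *m e)) 0.
  rewrite nz mulr0 in he.
  exists (((2 * w * t + 1) / dotv d e) *: e); split.
    apply: infnorm_le; first lra.
    move=> i; rewrite -scalemxAr mxE normrM.
    have : `|(B *m e) i 0| <= 0 by rewrite -nz infnorm_ge.
    rewrite normr_le0 => /eqP ->; rewrite normr0 mulr0; lra.
  rewrite dotvZr mulfVK ?gt_eqF //; lra.
have np : 0 < infnorm (B *m e) by rewrite lt_neqAle eq_sym npos.
move: np he; set n := infnorm (B *m e) => np he.
have k0 : 0 < 2 * w / n by rewrite divr_gt0 // mulr_gt0.
exists ((2 * w / n) *: e); split.
  apply: infnorm_le; first lra.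
  move=> i; rewrite -scalemxAr mxE normrM (gtr0_norm k0).
  apply: le_trans (ler_wpM2l (ltW k0) (infnorm_ge _ i)) _.
  by rewrite -/n divfK // gt_eqF.
rewrite dotvZr.
have H1 : 2 * w / n * (t * n) < 2 * w / n * dotv d e by rewrite ltr_pM2l.
have -> : 2 * w * t = 2 * w / n * (t * n).
  by field; rewrite gt_eqF.
exact: H1.
Qed.

Lemma min_feas (R : realType) m p (B : 'M[R]_(m, p)) (d : 'cV[R]_p) lamf :
  B^T *m lamf = d -> exists2 lam0, B^T *m lam0 = d &
    forall lam, B^T *m lam = d -> norm1 lam0 <= norm1 lam.
Proof.
move=> hf.
pose S := [set v : 'rV[R]_m | norm1 v^T <= norm1 lamf] `&` [set v | B^T *m v^T = d].
have S0 : S !=set0 by exists lamf^T; rewrite /S /= trmxK; split.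
have Scl : closed S.
  apply: closedI; first exact: (closed_le_fun (@cont_norm1 R m)).
  exact: closed_feas.
have Sb : forall v, S v -> forall i, `|v 0 i| <= norm1 lamf.
  move=> v [Sv _] i; apply: le_trans Sv; have := norm1_entry (v^T) i; by rewrite mxE.
have [v0 [Sv0 Fv0] vmin] := min_exists S0 Scl (norm1_ge0 lamf) Sb (@cont_norm1 R m).
exists v0^T => // lam hl.
have [le|lt] := lerP (norm1 lam) (norm1 lamf).
  by have := vmin lam^T; rewrite trmxK; apply; split; rewrite /= trmxK.
by apply: le_trans Sv0 (ltW lt).
Qed.
Lemma width_mono (R : realType) p (d : 'cV[R]_p) (C1 C2 : set 'cV[R]_p) :
  C1 `<=` C2 -> (width d C1 <= width d C2)%E.
Proof.
move=> H; rewrite /width; apply: leeB.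
  by apply: ereal_sup_le => _ [x hx <-]; exists x => //; exact: H.
by apply: ereal_inf_le_tmp => _ [x hx <-]; exists x => //; exact: H.
Qed.

Lemma infnormN (R : realDomainType) m (v : 'cV[R]_m) : infnorm (- v) = infnorm v.
Proof. by rewrite /infnorm; apply: eq_bigr => i _; rewrite mxE normrN. Qed.

Lemma stack_entry (R : ringType) Nj c p (Phi : 'I_Nj -> 'M[R]_(c, p)) (x : 'cV[R]_p) i :
  (stack Phi *m x) i 0 = (Phi (blk i) *m x) (rowin i) 0.
Proof. by rewrite !mxE; apply: eq_bigr => k _; rewrite mxE. Qed.

Unset Implicit Arguments.
Theorem proposition1 (R : realType) (p c Nj : nat)
  (Theta : set 'cV[R]_p) (theta_star : 'cV[R]_p)
  (Phi : 'I_Nj -> 'M[R]_(c, p)) (A A_act : 'M[R]_(Nj * c, p))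
  (zs ws : 'I_Nj -> 'cV[R]_c) (wbar : R) :
  Theta theta_star ->
  A = stack Phi ->
  A_act = A ->
  0 < wbar ->
  (forall j, zs j = Phi j *m theta_star + ws j) ->
  (forall j, infnorm (ws j) <= wbar) ->
  let z := stack zs in
  let Theta_act := [set th | Theta th /\ infnorm (z - A_act *m th) <= wbar] in
  let E := [set e : 'cV[R]_p | infnorm (A *m e) <= 2 * wbar] in
  let Theta_N := [set th | Theta th /\ E (th - theta_star)] in
  forall d : 'cV[R]_p, unit_dir d ->
    (width d Theta_act <= width d Theta_N)%E /\
    (width d Theta_N <= Order.min (width d Theta) (2%:E * hsupp E d))%E /\
    hsupp E d =
      ((2 * wbar)%:E *
         ereal_inf [set (norm1 lam)%:E | lam in [set lam : 'cV[R]_(Nj * c) | A^T *m lam = d]])%E /\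
    ((exists lam : 'cV[R]_(Nj * c), A^T *m lam = d) ->
      exists2 lam0 : 'cV[R]_(Nj * c), A^T *m lam0 = d &
        ((norm1 lam0)%:E = ereal_inf [set (norm1 lam)%:E | lam in [set lam : 'cV[R]_(Nj * c) | A^T *m lam = d]])%E).
Proof.
move=> Hth HA HAct w0 Hz Hw z Theta_act E Theta_N d hd.
have hwz : forall i, `|(z - A *m theta_star) i 0| <= wbar.
  move=> i; rewrite HA !mxE Hz !mxE /stack.
  under [X in _ - X]eq_bigr do rewrite mxE.
  rewrite addrAC subrr add0r.
  exact: le_trans (infnorm_ge _ _) (Hw _).
have sub1 : Theta_act `<=` Theta_N.
  move=> th [Tth hth]; split => //; rewrite /E /=.
  apply: infnorm_le; first lra.
  move=> i.
  have -> : (A *m (th - theta_star)) i 0 =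
     (z - A *m theta_star) i 0 - (z - A_act *m th) i 0.
    by rewrite HAct mulmxBr !mxE; ring.
  apply: le_trans (ler_normB _ _) _.
  have := hwz i; have := le_trans (infnorm_ge _ i) hth; lra.
have sub2 : Theta_N `<=` Theta by move=> th [].
have E0 : E 0 by rewrite /E /= mulmx0; apply: infnorm_le => [|i]; rewrite ?mxE ?normr0; lra.
have EN : forall e, E e -> E (- e) by move=> e; rewrite /E /= mulmxN infnormN.
have h0 : (0 <= hsupp E d)%E.
  by apply: ereal_sup_ubound; exists 0 => //; rewrite /dotv big1 // => k _; rewrite mxE mulr0.
split; first exact: width_mono.
split.
  rewrite le_min; apply/andP; split; first exact: width_mono.
  case Eh: (hsupp E d) => [r| |]; last by rewrite Eh in h0.
    have hsup : (ereal_sup [set (dotv d x)%:E | x in Theta_N] <= (dotv d theta_star + r)%:E)%E.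
      apply: ge_ereal_sup => _ [x [Tx Ex] <-].
      have : ((dotv d (x - theta_star))%:E <= hsupp E d)%E.
        by apply: ereal_sup_ubound; exists (x - theta_star).
      rewrite Eh lee_fin dotvBr lee_fin; lra.
    have hinf : ((dotv d theta_star - r)%:E <= ereal_inf [set (dotv d x)%:E | x in Theta_N])%E.
      apply: le_ereal_inf_tmp => _ [x [Tx Ex] <-].
      have : ((dotv d (theta_star - x))%:E <= hsupp E d)%E.
        apply: ereal_sup_ubound; exists (theta_star - x) => //.
        by rewrite -opprB; exact: EN.
      rewrite Eh lee_fin dotvBr lee_fin; lra.
    rewrite /width; apply: le_trans (leeB hsup hinf) _.
    rewrite -EFinB -EFinM lee_fin; lra.
  by rewrite gt0_muley ?lte_fin //; exact: leey.
have [[lamf hf]|nf] := pselect (exists lam, A^T *m lam = d).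
  have [lam0 hl0 lmin] := min_feas hf.
  have hinf : ereal_inf [set (norm1 lam)%:E | lam in [set lam | A^T *m lam = d]] = (norm1 lam0)%:E.
    apply/eqP; rewrite eq_le; apply/andP; split.
      by apply: ereal_inf_lbound; exists lam0.
    by apply: le_ereal_inf_tmp => _ [l hl <-]; rewrite lee_fin; apply: lmin.
  rewrite hinf; split; last by move=> _; exists lam0.
  rewrite -EFinM.
  have hup : (hsupp E d <= (2 * wbar * norm1 lam0)%:E)%E.
    apply: ge_ereal_sup => _ [e he <-]; rewrite lee_fin -hl0 dotv_adj.
    apply: le_trans (weak_dual _ _) _.
    rewrite [X in _ <= X]mulrC; apply: ler_wpM2l => //; exact: norm1_ge0.
  case Eh: (hsupp E d) hup h0 => [r| |] //.
  rewrite !lee_fin => hup hr0; congr (_%:E); apply/eqP; rewrite eq_le hup /=.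
  rewrite leNgt; apply/negP => hlt.
  pose t1 := r / (2 * wbar).
  have t0 : 0 <= t1 by rewrite /t1 divr_ge0 //; lra.
  have w2 : 2 * wbar * t1 = r by rewrite /t1 mulrC divfK // gt_eqF // mulr_gt0.
  have nfe : forall lam, norm1 lam <= t1 -> A^T *m lam != d.
    move=> lam hl; apply/eqP => hd'; have := lmin _ hd'; nra.
  have [e [he hde]] := sep2 w0 t0 nfe.
  have : ((dotv d e)%:E <= hsupp E d)%E by apply: ereal_sup_ubound; exists e.
  rewrite Eh lee_fin; lra.
have -> : [set (norm1 lam)%:E | lam in [set lam | A^T *m lam = d]] = set0.
  by apply/seteqP; split => // x [l hl]; exfalso; apply: nf; exists l.
rewrite ereal_inf0 gt0_muley ?lte_fin ?mulr_gt0 //.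
split; last by move=> [l hl]; exfalso; apply: nf; exists l.
case Eh: (hsupp E d) h0 => [r| |] // hr0; exfalso.
pose t1 := `|r| / (2 * wbar).
have t0 : 0 <= t1 by rewrite /t1 divr_ge0 //; lra.
have w2 : 2 * wbar * t1 = `|r| by rewrite /t1 mulrC divfK // gt_eqF // mulr_gt0.
have nfe : forall lam, norm1 lam <= t1 -> A^T *m lam != d.
  by move=> lam _; apply/eqP => hd'; apply: nf; exists lam.
have [e [he hde]] := sep2 w0 t0 nfe.
have : ((dotv d e)%:E <= hsupp E d)%E by apply: ereal_sup_ubound; exists e.
rewrite Eh lee_fin; have := ler_norm r; lra.
Qed.
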